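(* Let $\mathfrak{M}=(V,\langle\cdot,\cdot\rangle,A)$ be a model. (1) $\mathfrak{M}$ is Einstein if and only if $\mathfrak{M}$ is a simple Jacobi--Ricci commuting model with $\operatorname{Spec}(\rho)=\{a_1\}$ for some real $a_1$. (2) Let $\mathfrak{M}$ be a simple Jacobi--Ricci commuting model which is not Einstein, so that $\operatorname{Spec}(\rho)=\{a_1\pm a_2\sqrt{-1}\}$ with $a_1\in\mathbb{R}$, $a_2>0$. Set $J:=a_2^{-1}\{\rho-a_1\operatorname{id}\}$. Then $J$ is self-adjoint with respect to $\langle\cdot,\cdot\rangle$, $J^2=-\operatorname{id}$ (i.e. $J$ is a complex structure on $V$), $A(Jx,y,z,w)=A(x,Jy,z,w)=A(x,y,Jz,w)=A(x,y,z,Jw)$ for all $x,y,z,w\in V$, and $\rho=a_1\operatorname{id}+a_2J$.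
   Context: A model is a triple $\mathfrak{M}=(V,\langle\cdot,\cdot\rangle,A)$ where $V$ is a finite-dimensional real vector space, $\langle\cdot,\cdot\rangle$ is a non-degenerate symmetric bilinear form (inner product) of some signature $(p,q)$ on $V$, and $A\in\otimes^4V^*$ is an algebraic curvature tensor, i.e. $A(v_1,v_2,v_3,v_4)=-A(v_2,v_1,v_3,v_4)=A(v_3,v_4,v_1,v_2)$ and $A(v_1,v_2,v_3,v_4)+A(v_2,v_3,v_1,v_4)+A(v_3,v_1,v_2,v_4)=0$. The Jacobi operator $\mathcal{J}(x)$, curvature operator $\mathcal{R}(x,y)$ and Ricci operator $\rho$ are defined by $\langle\mathcal{J}(x)y,z\rangle=A(y,x,x,z)$, $\langle\mathcal{R}(x,y)z,w\rangle=A(x,y,z,w)$, and $\langle\rho x,y\rangle=\operatorname{Tr}\{z\mapsto\frac12\mathcal{R}(z,x)y+\frac12\mathcal{R}(z,y)x\}$. $\mathfrak{M}$ is Einstein if $\rho=a\operatorname{id}$ for some $a\in\mathbb{R}$. $\mathfrak{M}$ is Jacobi--Ricci commuting if $\mathcal{J}(v)\rho=\rho\mathcal{J}(v)$ for all $v\in V$; it is known that this is equivalent to $A(\rho v_1,v_2,v_3,v_4)=A(v_1,\rho v_2,v_3,v_4)=A(v_1,v_2,\rho v_3,v_4)=A(v_1,v_2,v_3,\rho v_4)$ for all $v_i\in V$. $\mathfrak{M}$ is a simple Jacobi--Ricci commuting model if it is Jacobi--Ricci commuting, $\rho$ is complex diagonalizable, and either $\operatorname{Spec}(\rho)=\{a_1\}$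 or $\operatorname{Spec}(\rho)=\{a_1\pm a_2\sqrt{-1}\}$ with $a_2>0$ (spectrum taken in $\mathbb{C}$). *)

(* Defs.v *)
From HB Require Import structures.
From mathcomp Require Import all_boot all_order all_algebra.
From mathcomp Require Import reals.
From mathcomp Require Import complex.
Set Implicit Arguments. Unset Strict Implicit. Unset Printing Implicit Defensive.
Import Order.TTheory GRing.Theory Num.Theory.
Local Open Scope ring_scope.

(* V = R^n, vectors are row vectors 'rV[R]_n; a linear endomorphism T is
   represented by a matrix M acting on the right: T v = v *m M. *)

Section Model.
Variables (R : realType) (n : nat).
Local Notation V := 'rV[R]_n.

Definition bvec (i : 'I_n) : V := delta_mx 0 i.

Definition ip (G : 'M[R]_n) (u v : V) : R := (u *m G *m v^T) 0 0.

(* a 4-tensor in (x)^4 V^*, given by its components in the standard basis,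
   evaluated (multilinearly) on four vectors *)
Definition tensor4 := 'I_n -> 'I_n -> 'I_n -> 'I_n -> R.

Definition Aev (A : tensor4) (x y z w : V) : R :=
  \sum_(i < n) \sum_(j < n) \sum_(k < n) \sum_(l < n)
     x 0 i * y 0 j * z 0 k * w 0 l * A i j k l.

(* non-degenerate symmetric bilinear form (any signature) *)
Definition inner_product (G : 'M[R]_n) : Prop := G^T = G /\ G \in unitmx.

Definition algebraic_curvature_tensor (A : tensor4) : Prop :=
  (forall v1 v2 v3 v4, Aev A v1 v2 v3 v4 = - Aev A v2 v1 v3 v4) /\
  (forall v1 v2 v3 v4, Aev A v1 v2 v3 v4 = Aev A v3 v4 v1 v2) /\
  (forall v1 v2 v3 v4,
      Aev A v1 v2 v3 v4 + Aev A v2 v3 v1 v4 + Aev A v3 v1 v2 v4 = 0).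

Definition is_model (G : 'M[R]_n) (A : tensor4) : Prop :=
  inner_product G /\ algebraic_curvature_tensor A.

(* Jacobi operator: <J(x) y, z> = A(y, x, x, z) *)
Definition jacobi (G : 'M[R]_n) (A : tensor4) (x : V) : 'M[R]_n :=
  (\matrix_(i, j) Aev A (bvec i) x x (bvec j)) *m invmx G.

(* curvature operator: <R(x,y) z, w> = A(x, y, z, w) *)
Definition curv (G : 'M[R]_n) (A : tensor4) (x y : V) : 'M[R]_n :=
  (\matrix_(i, j) Aev A x y (bvec i) (bvec j)) *m invmx G.

(* Tr { z |-> 1/2 R(z,x) y + 1/2 R(z,y) x }, trace computed in the standard basis *)
Definition ricci_form (G : 'M[R]_n) (A : tensor4) (x y : V) : R :=
  \sum_(i < n) (2^-1 * (y *m curv G A (bvec i) x) 0 i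
               + 2^-1 * (x *m curv G A (bvec i) y) 0 i).

(* Ricci operator: <rho x, y> = ricci_form x y *)
Definition ricci (G : 'M[R]_n) (A : tensor4) : 'M[R]_n :=
  (\matrix_(i, j) ricci_form G A (bvec i) (bvec j)) *m invmx G.

Definition einstein (G : 'M[R]_n) (A : tensor4) : Prop :=
  exists a : R, ricci G A = a%:M.

Definition jacobi_ricci_commuting (G : 'M[R]_n) (A : tensor4) : Prop :=
  forall v : V, jacobi G A v *m ricci G A = ricci G A *m jacobi G A v.

Definition ricciC (G : 'M[R]_n) (A : tensor4) : 'M[R[i]]_n :=
  map_mx (fun r : R => (r%:C)%C) (ricci G A).

Definition spec_single (G : 'M[R]_n) (A : tensor4) (a1 : R) : Prop :=
  forall l : R[i], eigenvalue (ricciC G A) l <-> l = (a1%:C)%C.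

Definition spec_pair (G : 'M[R]_n) (A : tensor4) (a1 a2 : R) : Prop :=
  forall l : R[i], eigenvalue (ricciC G A) l <->
     (l = (a1 +i* a2)%C \/ l = (a1 -i* a2)%C).

Definition complex_diagonalizable (G : 'M[R]_n) (A : tensor4) : Prop :=
  exists2 P : 'M[R[i]]_n, P \in unitmx &
    is_diag_mx (P *m ricciC G A *m invmx P).

Definition simple_JRC (G : 'M[R]_n) (A : tensor4) : Prop :=
  jacobi_ricci_commuting G A /\ complex_diagonalizable G A /\
  ((exists a1 : R, spec_single G A a1) \/
   (exists a1 a2 : R, 0 < a2 /\ spec_pair G A a1 a2)).

End Model.

(* Main.v *)
Require Import Defs.
From HB Require Import structures.
From mathcomp Require Import all_boot all_order all_algebra.
From mathcomp Require Import reals.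
From mathcomp Require Import complex.
From mathcomp Require Import ring lra.
Import Order.TTheory GRing.Theory Num.Theory.
Local Open Scope ring_scope.
Set Implicit Arguments. Unset Strict Implicit.

Section H.
Variables (R : realType) (n : nat).
Local Notation V := 'rV[R]_n.
Implicit Types (x y z w u : V) (A : tensor4 R n).

Lemma Aev_lin1 A a b x u y z w :
  Aev A (a *: x + b *: u) y z w = a * Aev A x y z w + b * Aev A u y z w.
Proof.
rewrite /Aev !mulr_sumr -big_split; apply: eq_bigr => i _.
rewrite !mulr_sumr -big_split; apply: eq_bigr => j _.
rewrite !mulr_sumr -big_split; apply: eq_bigr => k _.
rewrite !mulr_sumr -big_split; apply: eq_bigr => l _.
rewrite !mxE /=; ring.
Qed.
Lemma Aev_lin2 A a b x u y z w :
  Aev A y (a *: x + b *: u) z w = a * Aev A y x z w + b * Aev A y u z w.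
Proof.
rewrite /Aev !mulr_sumr -big_split; apply: eq_bigr => i _.
rewrite !mulr_sumr -big_split; apply: eq_bigr => j _.
rewrite !mulr_sumr -big_split; apply: eq_bigr => k _.
rewrite !mulr_sumr -big_split; apply: eq_bigr => l _.
rewrite !mxE /=; ring.
Qed.
Lemma Aev_lin3 A a b x u y z w :
  Aev A y z (a *: x + b *: u) w = a * Aev A y z x w + b * Aev A y z u w.
Proof.
rewrite /Aev !mulr_sumr -big_split; apply: eq_bigr => i _.
rewrite !mulr_sumr -big_split; apply: eq_bigr => j _.
rewrite !mulr_sumr -big_split; apply: eq_bigr => k _.
rewrite !mulr_sumr -big_split; apply: eq_bigr => l _.
rewrite !mxE /=; ring.
Qed.
Lemma Aev_lin4 A a b x u y z w :
  Aev A y z w (a *: x + b *: u) = a * Aev A y z w x + b * Aev A y z w u.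
Proof.
rewrite /Aev !mulr_sumr -big_split; apply: eq_bigr => i _.
rewrite !mulr_sumr -big_split; apply: eq_bigr => j _.
rewrite !mulr_sumr -big_split; apply: eq_bigr => k _.
rewrite !mulr_sumr -big_split; apply: eq_bigr => l _.
rewrite !mxE /=; ring.
Qed.
Lemma Aev0_1 A y z w : Aev A 0 y z w = 0.
Proof. by have := Aev_lin1 A 0 0 0 0 y z w; rewrite !scale0r addr0 !mul0r addr0. Qed.
Lemma Aev0_4 A y z w : Aev A y z w 0 = 0.
Proof. by have := Aev_lin4 A 0 0 0 0 y z w; rewrite !scale0r addr0 !mul0r addr0. Qed.
Lemma Aev_sum1 A (c : 'I_n -> R) (v : 'I_n -> V) y z w :
  Aev A (\sum_i c i *: v i) y z w = \sum_i c i * Aev A (v i) y z w.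
Proof.
elim/big_rec2: _ => [|i a b _ <-]; first exact: Aev0_1.
by rewrite -[X in _ + X]scale1r Aev_lin1 mul1r.
Qed.
Lemma Aev_sum4 A (c : 'I_n -> R) (v : 'I_n -> V) y z w :
  Aev A y z w (\sum_i c i *: v i) = \sum_i c i * Aev A y z w (v i).
Proof.
elim/big_rec2: _ => [|i a b _ <-]; first exact: Aev0_4.
by rewrite -[X in _ + X]scale1r Aev_lin4 mul1r.
Qed.
Lemma Aev_expand1 A x y z w : Aev A x y z w = \sum_i x 0 i * Aev A (bvec R i) y z w.
Proof. by rewrite {1}(row_sum_delta x) Aev_sum1. Qed.
Lemma Aev_expand4 A x y z w : Aev A y z w x = \sum_i x 0 i * Aev A y z w (bvec R i).
Proof. by rewrite {1}(row_sum_delta x) Aev_sum4. Qed.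

Lemma ip_mul (G M : 'M[R]_n) u z : G \in unitmx ->
  ip G (u *m (M *m invmx G)) z = (u *m M *m z^T) 0 0.
Proof. by move=> hU; rewrite /ip !mulmxA -(mulmxA _ (invmx G)) mulVmx // mulmx1. Qed.

Lemma ip_jacobi G A v y z : G \in unitmx ->
  ip G (y *m jacobi G A v) z = Aev A y v v z.
Proof.
move=> hU; rewrite /jacobi ip_mul // mxE.
under eq_bigr => j _ do rewrite !mxE big_distrl /=.
rewrite exchange_big Aev_expand1; apply: eq_bigr => i _.
rewrite Aev_expand4 mulr_sumr; apply: eq_bigr => j _; rewrite !mxE; ring.
Qed.

Lemma ricci_sa G A x y : G^T = G -> G \in unitmx ->
  ip G (x *m ricci G A) y = ip G x (y *m ricci G A).
Proof.
move=> hG hU; rewrite /ricci ip_mul // /ip.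
set Ric := \matrix_(i, j) _.
have hR : Ric^T = Ric.
  by apply/matrixP => i j; rewrite !mxE /ricci_form; apply: eq_bigr => k _; rewrite addrC.
by rewrite !trmx_mul trmx_inv hG hR !mulmxA -(mulmxA x G) mulmxV // mulmx1.
Qed.

Lemma AevN1 A a b c d : Aev A (- a) b c d = - Aev A a b c d.
Proof. by have := Aev_lin1 A (-1) 0 a 0 b c d; rewrite scaleN1r scale0r addr0 mul0r addr0 mulN1r. Qed.
Lemma AevN2 A a b c d : Aev A b (- a) c d = - Aev A b a c d.
Proof. by have := Aev_lin2 A (-1) 0 a 0 b c d; rewrite scaleN1r scale0r addr0 mul0r addr0 mulN1r. Qed.
Lemma AevN3 A a b c d : Aev A b c (- a) d = - Aev A b c a d.
Proof. by have := Aev_lin3 A (-1) 0 a 0 b c d; rewrite scaleN1r scale0r addr0 mul0r addr0 mulN1r. Qed.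
Lemma AevN4 A a b c d : Aev A b c d (- a) = - Aev A b c d a.
Proof. by have := Aev_lin4 A (-1) 0 a 0 b c d; rewrite scaleN1r scale0r addr0 mul0r addr0 mulN1r. Qed.

Lemma mulJ (M : 'M[R]_n) c a u : u *m (c *: (M - a%:M)) = c *: (u *m M) + (- (c * a)) *: u.
Proof. by rewrite -scalemxAr mulmxBr mul_mx_scalar scalerBr scalerA scaleNr. Qed.

Lemma jrc_C G A y v z : G^T = G -> G \in unitmx -> jacobi_ricci_commuting G A ->
  Aev A (y *m ricci G A) v v z = Aev A y v v (z *m ricci G A).
Proof.
move=> hG hU hJ.
have : ip G (y *m (jacobi G A v *m ricci G A)) z = ip G (y *m (ricci G A *m jacobi G A v)) z by rewrite hJ.
by rewrite (mulmxA y (jacobi G A v)) (mulmxA y (ricci G A)) ip_jacobi // ricci_sa // ip_jacobi // => ->.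
Qed.

Lemma HC_J G A (c a : R) y v w z : G^T = G -> G \in unitmx -> jacobi_ricci_commuting G A ->
  Aev A (y *m (c *: (ricci G A - a%:M))) v w z + Aev A (y *m (c *: (ricci G A - a%:M))) w v z
  = Aev A y v w (z *m (c *: (ricci G A - a%:M))) + Aev A y w v (z *m (c *: (ricci G A - a%:M))).
Proof.
move=> hG hU hJ.
have e1 := jrc_C y v z hG hU hJ; have e2 := jrc_C y w z hG hU hJ.
have e3 := jrc_C y (1 *: v + 1 *: w) z hG hU hJ.
rewrite !Aev_lin2 !Aev_lin3 !mul1r in e3.
have key : Aev A (y *m ricci G A) v w z + Aev A (y *m ricci G A) w v z =
   Aev A y v w (z *m ricci G A) + Aev A y w v (z *m ricci G A) by lra.
have k' := congr1 (fun t => c * t) key; rewrite /= !mulrDr in k'.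
rewrite !mulJ !Aev_lin1 !Aev_lin4; lra.
Qed.

Lemma ip_lin1 (G : 'M[R]_n) a b u v w : ip G (a *: u + b *: v) w = a * ip G u w + b * ip G v w.
Proof. by rewrite /ip !mulmxDl -!scalemxAl !mxE. Qed.

Lemma ip_sym (G : 'M[R]_n) u v : G^T = G -> ip G u v = ip G v u.
Proof.
move=> hG; rewrite /ip.
transitivity (((u *m G *m v^T)^T) 0 0); first by rewrite [RHS]mxE.
by rewrite !trmx_mul trmxK hG mulmxA.
Qed.
End H.

Section Abs.
Variables (R : realFieldType) (T : Type) (f : T->T->T->T->R) (J : T->T).
Hypothesis H12 : forall a b c d, f a b c d = - f b a c d.
Hypothesis Hp : forall a b c d, f a b c d = f c d a b.
Hypothesis HB : forall a b c d, f a b c d + f b c a d + f c a b d = 0.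
Hypothesis J1 : forall a b c d, f (J (J a)) b c d = - f a b c d.
Hypothesis J2 : forall a b c d, f a (J (J b)) c d = - f a b c d.
Hypothesis J3 : forall a b c d, f a b (J (J c)) d = - f a b c d.
Hypothesis J4 : forall a b c d, f a b c (J (J d)) = - f a b c d.
Hypothesis HC : forall y v w z, f (J y) v w z + f (J y) w v z = f y v w (J z) + f y w v (J z).
Lemma absJ1 x y z w : f (J x) y z w = f x (J y) z w.
Proof using H12 Hp HB J1 J2 J3 J4 HC.
  have h0 := HC x y z w; rewrite ?J1 ?J2 ?J3 ?J4 in h0.
  have h1 := H12 x y z (J w); rewrite ?J1 ?J2 ?J3 ?J4 in h1.
  have h2 := Hp x y z (J w); rewrite ?J1 ?J2 ?J3 ?J4 in h2.
  have h3 := HB x y z (J w); rewrite ?J1 ?J2 ?J3 ?J4 in h3.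
  have h4 := H12 x y (J z) w; rewrite ?J1 ?J2 ?J3 ?J4 in h4.
  have h5 := HB x y (J z) w; rewrite ?J1 ?J2 ?J3 ?J4 in h5.
  have h6 := H12 x (J y) z w; rewrite ?J1 ?J2 ?J3 ?J4 in h6.
  have h7 := HB x (J y) z w; rewrite ?J1 ?J2 ?J3 ?J4 in h7.
  have h8 := HC x (J y) z (J w); rewrite ?J1 ?J2 ?J3 ?J4 in h8.
  have h9 := H12 x (J y) (J z) (J w); rewrite ?J1 ?J2 ?J3 ?J4 in h9.
  have h10 := HB x (J y) (J z) (J w); rewrite ?J1 ?J2 ?J3 ?J4 in h10.
  have h11 := HB (J x) y z w; rewrite ?J1 ?J2 ?J3 ?J4 in h11.
  have h12 := Hp (J x) (J y) z (J w); rewrite ?J1 ?J2 ?J3 ?J4 in h12.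
  have h13 := HB (J x) (J y) z (J w); rewrite ?J1 ?J2 ?J3 ?J4 in h13.
  have h14 := HC x y w z; rewrite ?J1 ?J2 ?J3 ?J4 in h14.
  have h15 := HB x y w (J z); rewrite ?J1 ?J2 ?J3 ?J4 in h15.
  have h16 := H12 x y (J w) z; rewrite ?J1 ?J2 ?J3 ?J4 in h16.
  have h17 := HB x y (J w) z; rewrite ?J1 ?J2 ?J3 ?J4 in h17.
  have h18 := HC x (J y) (J w) z; rewrite ?J1 ?J2 ?J3 ?J4 in h18.
  have h19 := HB x (J y) (J w) (J z); rewrite ?J1 ?J2 ?J3 ?J4 in h19.
  have h20 := HB (J x) y w z; rewrite ?J1 ?J2 ?J3 ?J4 in h20.
  have h21 := H12 (J x) (J y) (J w) z; rewrite ?J1 ?J2 ?J3 ?J4 in h21.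
  have h22 := HB (J x) (J y) (J w) z; rewrite ?J1 ?J2 ?J3 ?J4 in h22.
  have h23 := H12 x z y (J w); rewrite ?J1 ?J2 ?J3 ?J4 in h23.
  have h24 := Hp x z y (J w); rewrite ?J1 ?J2 ?J3 ?J4 in h24.
  have h25 := H12 x z (J y) w; rewrite ?J1 ?J2 ?J3 ?J4 in h25.
  have h26 := H12 x (J z) y w; rewrite ?J1 ?J2 ?J3 ?J4 in h26.
  have h27 := Hp x (J z) y w; rewrite ?J1 ?J2 ?J3 ?J4 in h27.
  have h28 := H12 x (J z) (J y) (J w); rewrite ?J1 ?J2 ?J3 ?J4 in h28.
  have h29 := Hp x (J z) (J y) (J w); rewrite ?J1 ?J2 ?J3 ?J4 in h29.
  have h30 := H12 (J x) z y w; rewrite ?J1 ?J2 ?J3 ?J4 in h30.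
  have h31 := Hp (J x) z y w; rewrite ?J1 ?J2 ?J3 ?J4 in h31.
  have h32 := H12 (J x) z (J y) (J w); rewrite ?J1 ?J2 ?J3 ?J4 in h32.
  have h33 := Hp (J x) z (J y) (J w); rewrite ?J1 ?J2 ?J3 ?J4 in h33.
  have h34 := Hp x z (J w) y; rewrite ?J1 ?J2 ?J3 ?J4 in h34.
  have h35 := HB x z (J w) y; rewrite ?J1 ?J2 ?J3 ?J4 in h35.
  have h36 := HC x z (J w) (J y); rewrite ?J1 ?J2 ?J3 ?J4 in h36.
  have h37 := Hp (J x) z (J w) (J y); rewrite ?J1 ?J2 ?J3 ?J4 in h37.
  have h38 := HB (J x) z (J w) (J y); rewrite ?J1 ?J2 ?J3 ?J4 in h38.
  have h39 := H12 x w y (J z); rewrite ?J1 ?J2 ?J3 ?J4 in h39.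
  have h40 := Hp x w y (J z); rewrite ?J1 ?J2 ?J3 ?J4 in h40.
  have h41 := H12 x (J w) y z; rewrite ?J1 ?J2 ?J3 ?J4 in h41.
  have h42 := HB x (J w) y z; rewrite ?J1 ?J2 ?J3 ?J4 in h42.
  have h43 := H12 x (J w) (J y) (J z); rewrite ?J1 ?J2 ?J3 ?J4 in h43.
  have h44 := Hp x (J w) (J y) (J z); rewrite ?J1 ?J2 ?J3 ?J4 in h44.
  have h45 := H12 (J x) w y z; rewrite ?J1 ?J2 ?J3 ?J4 in h45.
  have h46 := Hp (J x) w y z; rewrite ?J1 ?J2 ?J3 ?J4 in h46.
  have h47 := H12 (J x) (J w) (J y) z; rewrite ?J1 ?J2 ?J3 ?J4 in h47.
  have h48 := Hp (J x) (J w) (J y) z; rewrite ?J1 ?J2 ?J3 ?J4 in h48.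
  have h49 := HB (J x) (J w) (J y) z; rewrite ?J1 ?J2 ?J3 ?J4 in h49.
  have h50 := H12 x (J w) z y; rewrite ?J1 ?J2 ?J3 ?J4 in h50.
  have h51 := H12 (J x) (J w) z (J y); rewrite ?J1 ?J2 ?J3 ?J4 in h51.
  have h52 := HC y x z w; rewrite ?J1 ?J2 ?J3 ?J4 in h52.
  have h53 := HC y x (J z) (J w); rewrite ?J1 ?J2 ?J3 ?J4 in h53.
  lra.
Qed.
Lemma absJ2 x y z w : f x (J y) z w = f x y (J z) w.
Proof using H12 Hp HB J1 J2 J3 J4 HC.
  have h0 := HC x y z w; rewrite ?J1 ?J2 ?J3 ?J4 in h0.
  have h1 := H12 x y z (J w); rewrite ?J1 ?J2 ?J3 ?J4 in h1.
  have h2 := Hp x y z (J w); rewrite ?J1 ?J2 ?J3 ?J4 in h2.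
  have h3 := HB x y z (J w); rewrite ?J1 ?J2 ?J3 ?J4 in h3.
  have h4 := H12 x y (J z) w; rewrite ?J1 ?J2 ?J3 ?J4 in h4.
  have h5 := HB x y (J z) w; rewrite ?J1 ?J2 ?J3 ?J4 in h5.
  have h6 := H12 x (J y) z w; rewrite ?J1 ?J2 ?J3 ?J4 in h6.
  have h7 := Hp x (J y) z w; rewrite ?J1 ?J2 ?J3 ?J4 in h7.
  have h8 := HB x (J y) z w; rewrite ?J1 ?J2 ?J3 ?J4 in h8.
  have h9 := HC x (J y) z (J w); rewrite ?J1 ?J2 ?J3 ?J4 in h9.
  have h10 := H12 x (J y) (J z) (J w); rewrite ?J1 ?J2 ?J3 ?J4 in h10.
  have h11 := HB x (J y) (J z) (J w); rewrite ?J1 ?J2 ?J3 ?J4 in h11.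
  have h12 := Hp (J x) y z w; rewrite ?J1 ?J2 ?J3 ?J4 in h12.
  have h13 := HB (J x) y z w; rewrite ?J1 ?J2 ?J3 ?J4 in h13.
  have h14 := Hp (J x) (J y) z (J w); rewrite ?J1 ?J2 ?J3 ?J4 in h14.
  have h15 := HB (J x) (J y) z (J w); rewrite ?J1 ?J2 ?J3 ?J4 in h15.
  have h16 := HC x y w z; rewrite ?J1 ?J2 ?J3 ?J4 in h16.
  have h17 := H12 x y w (J z); rewrite ?J1 ?J2 ?J3 ?J4 in h17.
  have h18 := HB x y w (J z); rewrite ?J1 ?J2 ?J3 ?J4 in h18.
  have h19 := H12 x y (J w) z; rewrite ?J1 ?J2 ?J3 ?J4 in h19.
  have h20 := HB x y (J w) z; rewrite ?J1 ?J2 ?J3 ?J4 in h20.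
  have h21 := HC x (J y) (J w) z; rewrite ?J1 ?J2 ?J3 ?J4 in h21.
  have h22 := HB x (J y) (J w) (J z); rewrite ?J1 ?J2 ?J3 ?J4 in h22.
  have h23 := H12 (J x) y w z; rewrite ?J1 ?J2 ?J3 ?J4 in h23.
  have h24 := HB (J x) y w z; rewrite ?J1 ?J2 ?J3 ?J4 in h24.
  have h25 := H12 (J x) (J y) (J w) z; rewrite ?J1 ?J2 ?J3 ?J4 in h25.
  have h26 := HB (J x) (J y) (J w) z; rewrite ?J1 ?J2 ?J3 ?J4 in h26.
  have h27 := H12 x z y (J w); rewrite ?J1 ?J2 ?J3 ?J4 in h27.
  have h28 := Hp x z y (J w); rewrite ?J1 ?J2 ?J3 ?J4 in h28.
  have h29 := H12 x z (J y) w; rewrite ?J1 ?J2 ?J3 ?J4 in h29.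
  have h30 := Hp x z (J y) w; rewrite ?J1 ?J2 ?J3 ?J4 in h30.
  have h31 := H12 x (J z) y w; rewrite ?J1 ?J2 ?J3 ?J4 in h31.
  have h32 := Hp x (J z) y w; rewrite ?J1 ?J2 ?J3 ?J4 in h32.
  have h33 := H12 x (J z) (J y) (J w); rewrite ?J1 ?J2 ?J3 ?J4 in h33.
  have h34 := Hp x (J z) (J y) (J w); rewrite ?J1 ?J2 ?J3 ?J4 in h34.
  have h35 := H12 (J x) z y w; rewrite ?J1 ?J2 ?J3 ?J4 in h35.
  have h36 := Hp (J x) z y w; rewrite ?J1 ?J2 ?J3 ?J4 in h36.
  have h37 := H12 (J x) z (J y) (J w); rewrite ?J1 ?J2 ?J3 ?J4 in h37.
  have h38 := Hp (J x) z (J y) (J w); rewrite ?J1 ?J2 ?J3 ?J4 in h38.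
  have h39 := HC x z w y; rewrite ?J1 ?J2 ?J3 ?J4 in h39.
  have h40 := Hp x z w (J y); rewrite ?J1 ?J2 ?J3 ?J4 in h40.
  have h41 := HB x z w (J y); rewrite ?J1 ?J2 ?J3 ?J4 in h41.
  have h42 := Hp x z (J w) y; rewrite ?J1 ?J2 ?J3 ?J4 in h42.
  have h43 := HB x z (J w) y; rewrite ?J1 ?J2 ?J3 ?J4 in h43.
  have h44 := HC x z (J w) (J y); rewrite ?J1 ?J2 ?J3 ?J4 in h44.
  have h45 := Hp (J x) z w y; rewrite ?J1 ?J2 ?J3 ?J4 in h45.
  have h46 := HB (J x) z w y; rewrite ?J1 ?J2 ?J3 ?J4 in h46.
  have h47 := Hp (J x) z (J w) (J y); rewrite ?J1 ?J2 ?J3 ?J4 in h47.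
  have h48 := HB (J x) z (J w) (J y); rewrite ?J1 ?J2 ?J3 ?J4 in h48.
  have h49 := H12 x w y (J z); rewrite ?J1 ?J2 ?J3 ?J4 in h49.
  have h50 := Hp x w y (J z); rewrite ?J1 ?J2 ?J3 ?J4 in h50.
  have h51 := Hp x w (J y) z; rewrite ?J1 ?J2 ?J3 ?J4 in h51.
  have h52 := HB x w (J y) z; rewrite ?J1 ?J2 ?J3 ?J4 in h52.
  have h53 := H12 x (J w) y z; rewrite ?J1 ?J2 ?J3 ?J4 in h53.
  have h54 := HB x (J w) y z; rewrite ?J1 ?J2 ?J3 ?J4 in h54.
  have h55 := H12 x (J w) (J y) (J z); rewrite ?J1 ?J2 ?J3 ?J4 in h55.
  have h56 := Hp x (J w) (J y) (J z); rewrite ?J1 ?J2 ?J3 ?J4 in h56.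
  have h57 := H12 (J x) w y z; rewrite ?J1 ?J2 ?J3 ?J4 in h57.
  have h58 := Hp (J x) w y z; rewrite ?J1 ?J2 ?J3 ?J4 in h58.
  have h59 := HB (J x) w y z; rewrite ?J1 ?J2 ?J3 ?J4 in h59.
  have h60 := H12 (J x) (J w) (J y) z; rewrite ?J1 ?J2 ?J3 ?J4 in h60.
  have h61 := Hp (J x) (J w) (J y) z; rewrite ?J1 ?J2 ?J3 ?J4 in h61.
  have h62 := HB (J x) (J w) (J y) z; rewrite ?J1 ?J2 ?J3 ?J4 in h62.
  have h63 := H12 x w z (J y); rewrite ?J1 ?J2 ?J3 ?J4 in h63.
  have h64 := H12 x (J w) z y; rewrite ?J1 ?J2 ?J3 ?J4 in h64.
  have h65 := H12 (J x) w z y; rewrite ?J1 ?J2 ?J3 ?J4 in h65.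
  have h66 := H12 (J x) (J w) z (J y); rewrite ?J1 ?J2 ?J3 ?J4 in h66.
  have h67 := HC y x z w; rewrite ?J1 ?J2 ?J3 ?J4 in h67.
  have h68 := HC y x (J z) (J w); rewrite ?J1 ?J2 ?J3 ?J4 in h68.
  have h69 := HC y x w z; rewrite ?J1 ?J2 ?J3 ?J4 in h69.
  lra.
Qed.
Lemma absJ3 x y z w : f x y (J z) w = f x y z (J w).
Proof using H12 Hp HB J1 J2 J3 J4 HC.
  have h0 := HC x y z w; rewrite ?J1 ?J2 ?J3 ?J4 in h0.
  have h1 := H12 x y z (J w); rewrite ?J1 ?J2 ?J3 ?J4 in h1.
  have h2 := HB x y z (J w); rewrite ?J1 ?J2 ?J3 ?J4 in h2.
  have h3 := HB x y (J z) w; rewrite ?J1 ?J2 ?J3 ?J4 in h3.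
  have h4 := H12 x (J y) z w; rewrite ?J1 ?J2 ?J3 ?J4 in h4.
  have h5 := Hp x (J y) z w; rewrite ?J1 ?J2 ?J3 ?J4 in h5.
  have h6 := Hp (J x) y z w; rewrite ?J1 ?J2 ?J3 ?J4 in h6.
  have h7 := HB (J x) y z w; rewrite ?J1 ?J2 ?J3 ?J4 in h7.
  have h8 := HC x y w z; rewrite ?J1 ?J2 ?J3 ?J4 in h8.
  have h9 := H12 x y w (J z); rewrite ?J1 ?J2 ?J3 ?J4 in h9.
  have h10 := HB x y w (J z); rewrite ?J1 ?J2 ?J3 ?J4 in h10.
  have h11 := H12 x (J y) w z; rewrite ?J1 ?J2 ?J3 ?J4 in h11.
  have h12 := HB x (J y) w z; rewrite ?J1 ?J2 ?J3 ?J4 in h12.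
  have h13 := H12 (J x) y w z; rewrite ?J1 ?J2 ?J3 ?J4 in h13.
  have h14 := HB (J x) y w z; rewrite ?J1 ?J2 ?J3 ?J4 in h14.
  have h15 := H12 x z y (J w); rewrite ?J1 ?J2 ?J3 ?J4 in h15.
  have h16 := H12 x (J z) y w; rewrite ?J1 ?J2 ?J3 ?J4 in h16.
  have h17 := Hp x (J z) y w; rewrite ?J1 ?J2 ?J3 ?J4 in h17.
  have h18 := H12 (J x) z y w; rewrite ?J1 ?J2 ?J3 ?J4 in h18.
  have h19 := Hp (J x) z y w; rewrite ?J1 ?J2 ?J3 ?J4 in h19.
  have h20 := HC x z w y; rewrite ?J1 ?J2 ?J3 ?J4 in h20.
  have h21 := Hp x z w (J y); rewrite ?J1 ?J2 ?J3 ?J4 in h21.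
  have h22 := HB x z w (J y); rewrite ?J1 ?J2 ?J3 ?J4 in h22.
  have h23 := Hp (J x) z w y; rewrite ?J1 ?J2 ?J3 ?J4 in h23.
  have h24 := HB (J x) z w y; rewrite ?J1 ?J2 ?J3 ?J4 in h24.
  have h25 := H12 x w y (J z); rewrite ?J1 ?J2 ?J3 ?J4 in h25.
  have h26 := Hp x w y (J z); rewrite ?J1 ?J2 ?J3 ?J4 in h26.
  have h27 := H12 x w (J y) z; rewrite ?J1 ?J2 ?J3 ?J4 in h27.
  have h28 := Hp x w (J y) z; rewrite ?J1 ?J2 ?J3 ?J4 in h28.
  have h29 := HB x w (J y) z; rewrite ?J1 ?J2 ?J3 ?J4 in h29.
  have h30 := H12 (J x) w y z; rewrite ?J1 ?J2 ?J3 ?J4 in h30.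
  have h31 := Hp (J x) w y z; rewrite ?J1 ?J2 ?J3 ?J4 in h31.
  have h32 := HB (J x) w y z; rewrite ?J1 ?J2 ?J3 ?J4 in h32.
  have h33 := H12 x w z (J y); rewrite ?J1 ?J2 ?J3 ?J4 in h33.
  have h34 := H12 (J x) w z y; rewrite ?J1 ?J2 ?J3 ?J4 in h34.
  have h35 := HC y x z w; rewrite ?J1 ?J2 ?J3 ?J4 in h35.
  have h36 := HC y x w z; rewrite ?J1 ?J2 ?J3 ?J4 in h36.
  lra.
Qed.
End Abs.

Section Sp.
Variables (F : fieldType) (n : nat).
Implicit Types (M P D : 'M[F]_n).

Lemma diag_eig M P : P \in unitmx -> is_diag_mx (P *m M *m invmx P) ->
  forall i, eigenvalue M ((P *m M *m invmx P) i i).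
Proof.
move=> hP /is_diag_mxP hD i; apply/eigenvalueP; exists (delta_mx 0 i *m P).
  set D := P *m M *m invmx P.
  have hDP : D *m P = P *m M by rewrite /D mulmxKV.
  have {}hD : forall i j, i != j -> D i j = 0 by exact: hD.
  clearbody D.
  rewrite -mulmxA -hDP mulmxA -rowE.
  have -> : row i D = D i i *: delta_mx 0 i.
    apply/matrixP => k j; rewrite !mxE ord1 eqxx /=.
    case: (eqVneq i j) => [->|ne]; first by rewrite mulr1.
    by rewrite mulr0 hD.
  by rewrite -scalemxAl.
apply/negP => /eqP h.
have : (delta_mx 0 i : 'rV[F]_n) *m P *m invmx P = 0 by rewrite h mul0mx.
rewrite mulmxK // => /matrixP /(_ 0 i); rewrite !mxE !eqxx /= => /eqP.
by rewrite oner_eq0.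
Qed.

Lemma diag_scalar D c : is_diag_mx D -> (forall i, D i i = c) -> D = c%:M.
Proof.
move=> /is_diag_mxP hD hc; apply/matrixP => i j; rewrite !mxE.
by case: (eqVneq i j) => [->|ne]; rewrite ?hc ?mulr1n ?mulr0n ?hD.
Qed.

Lemma diag_sq D c k : is_diag_mx D -> (forall i, (D i i - c) ^+ 2 = k) ->
  (D - c%:M) *m (D - c%:M) = k%:M.
Proof.
move=> /is_diag_mxP hD hc; apply/matrixP => i j; rewrite !mxE (bigD1 i) //= big1.
  rewrite !mxE eqxx mulr1n addr0.
  case: (eqVneq i j) => [<-|ne]; first by rewrite mulr1n -(hc i) expr2.
  by rewrite (hD i j) //= !mulr0n subr0 mulr0.
move=> l hl; rewrite !mxE hD; last by rewrite eq_sym.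
by rewrite eq_sym (negbTE hl) mulr0n subr0 mul0r.
Qed.

Lemma conj_back M P : P \in unitmx -> M = invmx P *m (P *m M *m invmx P) *m P.
Proof. by move=> hP; rewrite !mulmxA mulmxKV // mulVmx // mul1mx. Qed.

Lemma conj_sq M P c k : P \in unitmx ->
  (P *m M *m invmx P - c%:M) *m (P *m M *m invmx P - c%:M) = k%:M ->
  (M - c%:M) *m (M - c%:M) = k%:M.
Proof.
move=> hP; set D := P *m M *m invmx P => h.
have e : M - c%:M = invmx P *m (D - c%:M) *m P.
  by rewrite mulmxBr mulmxBl -conj_back // scalar_mxC mulmxKV.
rewrite e -!mulmxA (mulmxA P) mulmxV // mul1mx !mulmxA -(mulmxA _ _ (D - _)) h.
by rewrite scalar_mxC -mulmxA mulVmx // mulmx1.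
Qed.
End Sp.

Lemma cplx_sq (R : rcfType) (a1 a2 : R) (l : R[i]) :
  (l = (a1 +i* a2)%C \/ l = (a1 -i* a2)%C) -> (l - (a1%:C)%C) ^+ 2 = - ((a2%:C)%C ^+ 2).
Proof. by case=> ->; rewrite !expr2; simpc. Qed.

Theorem lemma4 (R : realType) (n : nat) (hn : (0 < n)%N)
    (G : 'M[R]_n) (A : tensor4 R n) :
  is_model G A ->
  (* (1) *)
  (einstein G A <-> (simple_JRC G A /\ exists a1 : R, spec_single G A a1)) /\
  (* (2) *)
  (simple_JRC G A -> ~ einstein G A ->
   forall a1 a2 : R, 0 < a2 -> spec_pair G A a1 a2 ->
   let J := a2^-1 *: (ricci G A - a1%:M) in
   (forall x y : 'rV[R]_n, ip G (x *m J) y = ip G x (y *m J)) /\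
   J *m J = - 1%:M /\
   (forall x y z w : 'rV[R]_n,
      Aev A (x *m J) y z w = Aev A x (y *m J) z w /\
      Aev A x (y *m J) z w = Aev A x y (z *m J) w /\
      Aev A x y (z *m J) w = Aev A x y z (w *m J)) /\
   ricci G A = a1%:M + a2 *: J).
Proof.
move=> [[hGT hGU] [hA12 [hAp hAB]]].
have hRC : ricciC G A = map_mx (real_complex R) (ricci G A) by [].
split.
  split.
    case=> a ha.
    have hC : ricciC G A = ((a%:C)%C)%:M by rewrite hRC ha map_scalar_mx.
    have hsp : spec_single G A a.
      move=> l; rewrite hC; split.
        move/eigenvalueP => [v hv nz]; move: hv; rewrite mul_mx_scalar => /eqP.
        rewrite -subr_eq0 -scalerBl scaler_eq0 (negbTE nz) orbF subr_eq0 => /eqP.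
        by [].
      move=> ->; apply/eigenvalueP; exists (delta_mx 0 (Ordinal hn)).
        by rewrite mul_mx_scalar.
      apply/negP => /eqP/matrixP/(_ 0 (Ordinal hn)); rewrite !mxE !eqxx /= => /eqP.
      by rewrite oner_eq0.
    split; last by exists a.
    split; first by move=> v; rewrite ha scalar_mxC.
    split; last by left; exists a.
    exists 1%:M; first exact: unitmx1.
    by rewrite mul1mx invmx1 mulmx1 hC scalar_mx_is_diag.
  case=> [[hJ [[P hP hD] _]] [a1 hs]].
  exists a1.
  have hdi : forall i, (P *m ricciC G A *m invmx P) i i = (a1%:C)%C.
    by move=> i; apply/hs; exact: diag_eig.
  have hDs := diag_scalar hD hdi.
  have : ricciC G A = ((a1%:C)%C)%:M.
    by rewrite (conj_back (ricciC G A) hP) hDs scalar_mxC mulmxKV.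
  by rewrite hRC -map_scalar_mx => /map_mx_inj.
move=> [hJ [[P hP hD] _]] hnE a1 a2 ha2 hsp J.
have a2n0 : a2 != 0 by rewrite gt_eqF.
have hsa : forall x y, ip G (x *m ricci G A) y = ip G x (y *m ricci G A).
  by move=> x y; apply: ricci_sa.
have Jsq : (ricci G A - a1%:M) *m (ricci G A - a1%:M) = (- (a2 ^+ 2))%:M.
  have hdi : forall i, ((P *m ricciC G A *m invmx P) i i - (a1%:C)%C) ^+ 2 = - ((a2%:C)%C ^+ 2).
    by move=> i; apply: cplx_sq; apply/hsp; exact: diag_eig.
  have hsqC := conj_sq hP (diag_sq hD hdi).
  apply: (@map_mx_inj _ _ (real_complex R)).
  by rewrite map_mxM map_mxB map_scalar_mx -hRC map_scalar_mx rmorphN rmorphXn.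
have JJ : J *m J = - 1%:M.
  have -> : - 1%:M = (-1)%:M :> 'M[R]_n by rewrite -[(-1)%:M]scalemx1 scaleN1r.
  rewrite /J -scalemxAl -scalemxAr scalerA Jsq scale_scalar_mx; congr (_%:M).
  by field.
split.
  move=> x y; rewrite (ip_sym x) // /J !mulJ !ip_lin1 hsa (ip_sym x (y *m _)) //.
  by rewrite (ip_sym x y).
split; first exact: JJ.
split.
  have J1 : forall a b c d, Aev A (a *m J *m J) b c d = - Aev A a b c d.
    by move=> a b c d; rewrite -mulmxA JJ mulmxN mulmx1 AevN1.
  have J2 : forall a b c d, Aev A a (b *m J *m J) c d = - Aev A a b c d.
    by move=> a b c d; rewrite -mulmxA JJ mulmxN mulmx1 AevN2.
  have J3 : forall a b c d, Aev A a b (c *m J *m J) d = - Aev A a b c d.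
    by move=> a b c d; rewrite -mulmxA JJ mulmxN mulmx1 AevN3.
  have J4 : forall a b c d, Aev A a b c (d *m J *m J) = - Aev A a b c d.
    by move=> a b c d; rewrite -mulmxA JJ mulmxN mulmx1 AevN4.
  have HC : forall y v w z, Aev A (y *m J) v w z + Aev A (y *m J) w v z =
      Aev A y v w (z *m J) + Aev A y w v (z *m J).
    by move=> y v w z; apply: HC_J.
  move=> x y z w; split; [|split].
  - exact: (absJ1 (f := Aev A) (J := fun u => u *m J) hA12 hAp hAB J1 J2 J3 J4 HC).
  - exact: (absJ2 (f := Aev A) (J := fun u => u *m J) hA12 hAp hAB J1 J2 J3 J4 HC).
  - exact: (absJ3 (f := Aev A) (J := fun u => u *m J) hA12 hAp hAB J1 J2 J3 J4 HC).
by rewrite /J scalerA mulfV // scale1r addrC subrK.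
Qed.
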